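(* Let $\ell\ge 3$ be an integer, $\mathcal F=\{K_4,C_5,C_6,C_7,B_\ell\}$, and let $G$ be a graph. If $G$ contains one of the configurations (D2), (D3), (D5)–(D12) below and $H$ is the subgraph of $G$ induced by its vertices, then $H$ is enhanced weakly $(\mathcal F,4)$-boundary-reducible in $G$ with reduced part $R=V(H)$ (for a suitable nonempty $\mathrm{Fix}(H)\subseteq V(H)$). (D2) a triangle $T(3,3,3)$ or $T(3,3,4)$. (D3) $D_1=\mathrm{Dia}(6-3,4,3)$ and $D_2=\mathrm{Dia}(6-3,4,4)$ sharing their middle $6$-vertex and no other vertex. (D5) $\mathrm{Dia}(4-5,3,3)$. (D6) $\mathrm{Dia}(4-3,4,4)$. (D7) $\mathrm{Dia}(5-3,4,4)$ together with a $3$-vertex outside it adjacent to its middle $5$-vertex. (D8) $\mathrm{Dia}(5-5,3,3)$ together with a $3$-vertex outside it adjacent to one of its middle $5$-vertices. (D9) three $3$-vertices $u,v,w$ with $uv,vw\in E(G)$ and $uw\notin E(G)$. (D10) $\mathrm{Dia}(5-3,4,3)$. (D11) $T(5,3,3)$ together with a $3$-vertex outside it adjacent to its $5$-vertex. (D12) two triangles $T(6,3,3)$ sharing their $6$-vertex and no other vertex.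
   Context: $B_\ell$ is the book on $\ell$ vertices: an edge $xy$ plus $\ell-2$ further vertices each adjacent to exactly $x$ and $y$. All degrees are degrees in $G$; a $d$-vertex is a vertex of degree exactly $d$. $T(a,b,c)$ is a triangle with vertex degrees $a,b,c$. A diamond is a subgraph isomorphic to $K_4$ minus an edge; its two vertices of degree $3$ in it are middle vertices, the other two side vertices; $\mathrm{Dia}(a-b,c,d)$ is a diamond with middle vertex degrees $a,b$ and side vertex degrees $c,d$. For an induced subgraph $H$ of $G$ and $\emptyset\ne R\subseteq V(H)$, $\deg_R(v)$ is the degree of $v$ in $G[R]$. A set $I\subseteq V(H)$ is $\mathcal F$-free if adding to $H$ a new vertex adjacent exactly to $I$ creates no subgraph isomorphic to a member of $\mathcal F$. For $f:R\to\mathbb Z$, an $f$-assignment is a list assignment $L$ on $R$ with $|L(v)|\ge f(v)$; $f\downarrow v$ is $f$ changed to value $1$ at $v$; $1_I$ is the indicator of $I$. $H$ is enhanced weakly $(\mathcal F,k)$-boundary-reducible in $G$ with reduced part $R$ if there is a nonempty $\mathrm{Fix}(H)\subseteq R$ such that (FIX) every $v\in\mathrm{Fix}(H)$ satisfies $\deg_G(v)-\deg_R(v)\le k-3$ and $H[R]$ is properly $L$-colorable for every $((k-\deg_G+\deg_R)\downarrow v)$-assignment $L$; and (FORB) for every $\mathcal F$-free $I\subseteq R$ with $|I|\le k-3$, $H[R]$ is properly $L$-colorable for every $(k-\deg_G+\deg_R-1_I)$-assignment $L$. *)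

(* Defs.v *)
From mathcomp Require Import all_boot all_order all_algebra.
Set Implicit Arguments. Unset Strict Implicit. Unset Printing Implicit Defensive.
Import GRing.Theory Num.Theory.
Local Open Scope ring_scope.

(* A (finite simple) graph G is given by a vertex type T : finType and an
   edge relation e : rel T, assumed symmetric and irreflexive in the theorem. *)

Definition deg (T : finType) (e : rel T) (v : T) : nat := #|[set u | e v u]|.

Definition degR (T : finType) (e : rel T) (R : {set T}) (v : T) : nat :=
  #|[set u in R | e v u]|.

Definition has_subgraph (P : finType) (pe : rel P)
    (V : finType) (ev : rel V) (inV : pred V) : Prop :=
  exists phi : P -> V,
    [/\ injective phi, forall x, inV (phi x)
      & forall x y, pe x y -> ev (phi x) (phi y)].

Definition K_rel (n : nat) : rel 'I_n := fun i j => i != j.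
Definition cycle_rel (n : nat) : rel 'I_n :=
  fun i j => (nat_of_ord j == (i.+1 %% n)%N) || (nat_of_ord i == (j.+1 %% n)%N).
(* book B_ell: vertices 0,1 form the spine xy, every other vertex is
   adjacent to exactly 0 and 1 *)
Definition book_rel (ell : nat) : rel 'I_ell :=
  fun i j => (i != j) && ((nat_of_ord i < 2)%N || (nat_of_ord j < 2)%N).

(* H + z : the graph on V(H) (= VH) plus a new vertex None adjacent exactly
   to I; H is the subgraph of G induced by VH. *)
Definition ext_edge (T : finType) (e : rel T) (VH I : {set T}) : rel (option T) :=
  fun x y =>
    match x, y with
    | Some a, Some b => [&& a \in VH, b \in VH & e a b]
    | None, Some b => (b \in VH) && (b \in I)
    | Some a, None => (a \in VH) && (a \in I)
    | None, None => false
    end.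
Definition ext_vert (T : finType) (VH : {set T}) : pred (option T) :=
  fun x => if x is Some a then a \in VH else true.

Definition F_free (T : finType) (e : rel T) (ell : nat) (VH I : {set T}) : Prop :=
  let G' := ext_edge e VH I in
  let V' := ext_vert VH in
  ~ (has_subgraph (@K_rel 4%N) G' V' \/
     has_subgraph (@cycle_rel 5%N) G' V' \/
     has_subgraph (@cycle_rel 6%N) G' V' \/
     has_subgraph (@cycle_rel 7%N) G' V' \/
     has_subgraph (@book_rel ell) G' V').

(* list assignments: colours are natural numbers; |L(v)| is the number of
   distinct colours in the list L v *)
Definition is_assignment (T : finType) (f : T -> int) (R : {set T})
    (L : T -> seq nat) : Prop :=
  forall v, v \in R -> f v <= (size (undup (L v)))%:Z.

Definition L_colorable (T : finType) (e : rel T) (R : {set T})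
    (L : T -> seq nat) : Prop :=
  exists c : T -> nat,
    (forall v, v \in R -> c v \in L v) /\
    (forall u v, u \in R -> v \in R -> e u v -> c u != c v).

Definition fbase (T : finType) (e : rel T) (k : nat) (R : {set T}) (v : T) : int :=
  k%:Z - (deg e v)%:Z + (degR e R v)%:Z.

Definition fdown (T : finType) (f : T -> int) (v : T) : T -> int :=
  fun u => if u == v then 1 else f u.

Definition indic (T : finType) (I : {set T}) (u : T) : int :=
  if u \in I then 1 else 0.

Definition enh_weak_reducible (T : finType) (e : rel T) (ell k : nat)
    (VH R : {set T}) : Prop :=
  R \subset VH /\ R != set0 /\
  (exists Fix : {set T},
     [/\ Fix != set0, Fix \subset R &
       forall v, v \in Fix ->
         (deg e v)%:Z - (degR e R v)%:Z <= k%:Z - 3 /\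
         (forall L, is_assignment (fdown (fbase e k R) v) R L ->
                    L_colorable e R L)]) /\
  (forall I : {set T}, I \subset R -> F_free e ell VH I ->
     #|I|%:Z <= k%:Z - 3 ->
     forall L, is_assignment (fun u => fbase e k R u - indic I u) R L ->
               L_colorable e R L).

Definition tri (T : finType) (e : rel T) (a b c : T) : bool :=
  [&& e a b, e b c & e a c].
(* diamond with middle vertices a b and side vertices c d *)
Definition dia (T : finType) (e : rel T) (a b c d : T) : bool :=
  [&& e a b, e a c, e a d, e b c, e b d & uniq [:: a; b; c; d]].

Definition config (T : finType) (e : rel T) (S : {set T}) : Prop :=
  let dg := deg e in
  (exists a b c, [/\ tri e a b c, dg a = 3%N, dg b = 3%N,
                        (dg c = 3%N \/ dg c = 4%N) & S = [set a; b; c]]) \/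
  (exists a b c d b' c' d',
        [/\ uniq [:: a; b; c; d; b'; c'; d'], dia e a b c d && dia e a b' c' d',
            [/\ dg a = 6%N, dg b = 3%N, dg c = 4%N & dg d = 3%N],
            [/\ dg b' = 3%N, dg c' = 4%N & dg d' = 4%N]
          & S = [set a; b; c; d; b'; c'; d']]) \/
  (exists a b c d,
        [/\ dia e a b c d, [/\ dg a = 4%N, dg b = 5%N, dg c = 3%N & dg d = 3%N]
          & S = [set a; b; c; d]]) \/
  (exists a b c d,
        [/\ dia e a b c d, [/\ dg a = 4%N, dg b = 3%N, dg c = 4%N & dg d = 4%N]
          & S = [set a; b; c; d]]) \/
  (exists a b c d x,
        [/\ dia e a b c d, [/\ dg a = 5%N, dg b = 3%N, dg c = 4%N & dg d = 4%N],
            uniq [:: a; b; c; d; x] && e a x, dg x = 3%N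
          & S = [set a; b; c; d; x]]) \/
  (exists a b c d x,
        [/\ dia e a b c d, [/\ dg a = 5%N, dg b = 5%N, dg c = 3%N & dg d = 3%N],
            uniq [:: a; b; c; d; x] && e a x, dg x = 3%N
          & S = [set a; b; c; d; x]]) \/
  (exists u v w,
        [/\ uniq [:: u; v; w], [/\ dg u = 3%N, dg v = 3%N & dg w = 3%N],
            e u v, e v w & ~~ e u w] /\ S = [set u; v; w]) \/
  (exists a b c d,
        [/\ dia e a b c d, [/\ dg a = 5%N, dg b = 3%N, dg c = 4%N & dg d = 3%N]
          & S = [set a; b; c; d]]) \/
  (exists a b c x,
        [/\ tri e a b c, [/\ dg a = 5%N, dg b = 3%N & dg c = 3%N],
            uniq [:: a; b; c; x] && e a x, dg x = 3%N
          & S = [set a; b; c; x]]) \/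
  (exists a b c b' c',
        [/\ uniq [:: a; b; c; b'; c'], tri e a b c, tri e a b' c',
            [/\ dg a = 6%N, dg b = 3%N, dg c = 3%N, dg b' = 3%N & dg c' = 3%N]
          & S = [set a; b; c; b'; c']]).

(* Main.v *)
Require Import Defs.
From mathcomp Require Import all_boot all_order all_algebra zify.
Set Implicit Arguments. Unset Strict Implicit. Unset Printing Implicit Defensive.
Import GRing.Theory Num.Theory.
Local Open Scope ring_scope.

Definition sz (l : seq nat) : nat := size (undup l).
Definition rm (a : nat) (l : seq nat) : seq nat := [seq x <- l | x != a].

Lemma sz_filter (a : nat) (l : seq nat) :
  (sz l <= (sz (rm a l)).+1)%N.
Proof.
rewrite /sz /rm -filter_undup size_filter.
have U := undup_uniq l.
have := count_predC (fun x => x != a) (undup l).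
have : (count (predC (fun x => x != a)) (undup l) <= 1)%N.
  rewrite (eq_count (a2 := pred1 a)); last by move=> x; rewrite /= negbK.
  by rewrite count_uniq_mem //; case: (_ \in _).
lia.
Qed.

Lemma sz_filter_notin (a : nat) (l : seq nat) : a \notin l ->
  sz (rm a l) = sz l.
Proof.
move=> Ha; rewrite /sz /rm -filter_undup size_filter.
have := count_predC (fun x => x != a) (undup l).
rewrite (eq_count (a1 := predC _) (a2 := pred1 a)); last by move=> x; rewrite /= negbK.
rewrite count_uniq_mem ?undup_uniq // mem_undup (negbTE Ha).
by rewrite addn0.
Qed.

Lemma sz_sub (l1 l2 : seq nat) : {subset l1 <= l2} -> (sz l1 <= sz l2)%N.
Proof.
move=> H; apply: uniq_leq_size; first exact: undup_uniq.
by move=> x; rewrite !mem_undup; apply: H.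
Qed.

Lemma degR_D1 (T : finType) (e : rel T) (R : {set T}) a v : a \in R ->
  degR e R v = (e v a + degR e (R :\ a) v)%N.
Proof.
move=> Ha; rewrite /degR (cardsD1 a [set u in R | e v u]) inE Ha /=.
congr (_ + _)%N; apply: eq_card => u; rewrite !inE.
by rewrite andbA.
Qed.

Definition Inv (T : finType) (e : rel T) (g : T -> int) (R : {set T})
  (L : T -> seq nat) := forall v, v \in R -> ((g v + (degR e R v)%:Z) <= (sz (L v))%:Z :> int).
Definition Win (T : finType) (e : rel T) (g : T -> int) (R : {set T}) :=
  forall L, Inv e g R L -> L_colorable e R L.

Lemma win0 (T : finType) (e : rel T) g : Win e g set0.
Proof. by move=> L _; exists (fun _ => 0%N); split => v; rewrite inE. Qed.

Lemma win_mono (T : finType) (e : rel T) g g' (R : {set T}) :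
  (forall v, v \in R -> g v <= g' v) -> Win e g R -> Win e g' R.
Proof.
move=> Hg W L HL; apply: W => v Hv; have := HL v Hv; have := Hg v Hv; lia.
Qed.

Lemma extend (T : finType) (e : rel T) (R : {set T}) (L : T -> seq nat) a (al : nat) :
  symmetric e -> irreflexive e -> a \in R -> al \in L a ->
  L_colorable e (R :\ a) (fun v => if e a v then rm al (L v) else L v) ->
  L_colorable e R L.
Proof.
move=> Hs Hi Ha Hal [c [Hc1 Hc2]].
exists (fun v => if v == a then al else c v); split.
  move=> v Hv; case: eqP => [->//|/eqP Hva].
  have := Hc1 v; rewrite !inE Hva Hv => /(_ isT).
  by case: (e a v) => //; rewrite /rm mem_filter => /andP[].
move=> u v Hu Hv Huv.
case: (eqVneq u a) Hu Huv => [->|Hua] Hu Huv; case: (eqVneq v a) Hv Huv => [->|Hva] Hv Huv.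
- by rewrite Hi in Huv.
- idtac.
  have := Hc1 v; rewrite !inE Hva Hv Huv => /(_ isT).
  by rewrite /rm mem_filter eq_sym => /andP[].
- idtac.
  have := Hc1 u; rewrite !inE Hua Hu Hs Huv => /(_ isT).
  by rewrite /rm mem_filter => /andP[].
- apply: Hc2 => //; by rewrite !inE ?Hua ?Hva ?Hu ?Hv.
Qed.

Lemma win_greedy (T : finType) (e : rel T) (g : T -> int) (R : {set T}) (a : T) :
  symmetric e -> irreflexive e -> a \in R -> 1 <= g a + (degR e R a)%:Z ->
  Win e g (R :\ a) -> Win e g R.
Proof.
move=> Hs Hi Ha Hga W L HL.
have := HL a Ha; rewrite /sz.
case E: (undup (L a)) => [|al s]; first by move=> H; exfalso; move: Hga H => /=; lia.
have Hal : al \in L a by rewrite -mem_undup E inE eqxx.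
move=> _; apply: (extend Hs Hi Ha Hal); apply: W => v.
rewrite !inE => /andP[Hva Hv].
have := HL v Hv; rewrite (@degR_D1 _ e R a v Ha) Hs.
case: (e a v) => /=; last by lia.
have := sz_filter al (L v); lia.
Qed.

Lemma win_trick (T : finType) (e : rel T) (g : T -> int) (R : {set T}) (a c : T) :
  symmetric e -> irreflexive e -> a \in R -> c \in R -> e a c ->
  1 <= g a + (degR e R a)%:Z ->
  g c + (degR e R c)%:Z + 1 <= g a + (degR e R a)%:Z ->
  Win e (fun v => g v + (v == c)%:Z) (R :\ a) -> Win e g R.
Proof.
move=> Hs Hi Ha Hc Hac Hga Hgc W L HL.
have HLa := HL a Ha; have HLc := HL c Hc.
have Hca : c != a by apply/eqP => E; subst; rewrite Hi in Hac.
have [al [Hal Hnc]] : exists al, al \in L a /\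
   (al \notin L c \/ {subset L a <= L c}).
  case: (boolP (has (fun x => x \notin L c) (L a))).
    by case/hasP => x Hx Hxc; exists x; split => //; left.
  move/hasPn => H.
  have: L a != [::] by apply/eqP => E; move: HLa; rewrite E /sz /=; lia.
  case E: (L a) => [//|x s] _; exists x; split; first by rewrite inE eqxx.
  by right => y; rewrite -E => /H; rewrite negbK.
apply: (extend Hs Hi Ha Hal); apply: W => v.
rewrite !inE => /andP[Hva Hv].
have := HL v Hv; rewrite (@degR_D1 _ e R a v Ha) Hs.
case: (eqVneq v c) => [Evc|Hvc].
  subst v; rewrite Hac /=.
  case: Hnc => [Hn|Hsub].
    by rewrite sz_filter_notin //; lia.
  have := sz_filter al (L c); have := sz_sub Hsub; move: HLa Hgc; rewrite (@degR_D1 _ e R a c Ha) Hs Hac.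
  lia.
rewrite /=.
case: (e a v) => /=; last by lia.
have := sz_filter al (L v); lia.
Qed.

Definition gI (T : finType) (e : rel T) (I : {set T}) : T -> int :=
  fun u => 4%:Z - (deg e u)%:Z - indic I u.

Lemma reduce (T : finType) (e : rel T) (ell : nat) (S : {set T}) (v0 : T) :
  symmetric e -> irreflexive e ->
  v0 \in S -> (deg e v0 <= degR e S v0 + 1)%N ->
  Win e (gI e set0) (S :\ v0) ->
  Win e (gI e set0) S ->
  (forall v, v \in S -> F_free e ell S [set v] -> Win e (gI e [set v]) S) ->
  enh_weak_reducible e ell 4 S S.
Proof.
move=> Hs Hi Hv0 Hdeg Wfix W0 W1.
split; first exact: subxx.
split; first by apply/set0Pn; exists v0.
split.
  exists [set v0]; split.
  - by apply/set0Pn; exists v0; rewrite inE.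
  - by rewrite sub1set.
  move=> v /set1P ->; split; first by lia.
  move=> L HL.
  pose g u := fdown (fbase e 4 S) v0 u - (degR e S u)%:Z.
  have W : Win e g S.
    apply: (win_greedy Hs Hi Hv0).
      by rewrite /g /fdown eqxx; lia.
    apply: win_mono Wfix => u; rewrite !inE => /andP[Hu _].
    by rewrite /g /fdown /gI /fbase /indic inE (negbTE Hu); lia.
  apply: W => u Hu; have := HL u Hu; rewrite /g /sz; lia.
move=> I HIS HF HI L HL.
have HIn : (#|I| <= 1)%N by move: HI; lia.
have HInv : Inv e (gI e I) S L.
  by move=> u Hu; have := HL u Hu; rewrite /gI /fbase /sz; lia.
case: (leqP #|I| 0) => H0.
  have E : I = set0 by apply: cards0_eq; lia.
  by subst I; apply: W0.
have /cards1P [v E] : #|I| == 1%N by apply/eqP; lia.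
subst I; apply: (W1 v) => //.
by rewrite -sub1set.
Qed.

Lemma k4_notfree (T : finType) (e : rel T) (ell : nat) (VH I : {set T}) (x1 x2 x3 x4 : T) :
  uniq [:: x1; x2; x3; x4] -> x1 \in VH -> x2 \in VH -> x3 \in VH -> x4 \in VH ->
  e x1 x2 -> e x1 x3 -> e x1 x4 -> e x2 x3 -> e x2 x4 -> e x3 x4 ->
  symmetric e -> ~ F_free e ell VH I.
Proof.
move=> U H1 H2 H3 H4 E12 E13 E14 E23 E24 E34 Hs HF; apply: HF; left.
exists (fun i : 'I_4 => Some (nth x1 [:: x1; x2; x3; x4] i)); split.
- move=> i j [] /eqP; rewrite nth_uniq //= => /eqP; exact: val_inj.
- by move=> [[|[|[|[|i]]]] Hi].
move=> [[|[|[|[|i]]]] Hi] [[|[|[|[|j]]]] Hj] //=; rewrite /K_rel /= ?H1 ?H2 ?H3 ?H4 /=;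
  rewrite ?E12 ?E13 ?E14 ?E23 ?E24 ?E34 ?(Hs x2) ?(Hs x3) ?(Hs x4) ?E12 ?E13 ?E14 ?E23 ?E24 ?E34 //.
Qed.

Lemma degR_ge (T : finType) (e : rel T) (R : {set T}) (x : T) (s : seq T) :
  uniq s -> all (fun u => (u \in R) && e x u) s -> (size s <= degR e R x)%N.
Proof.
move=> U A; rewrite /degR -(card_uniqP U); apply: subset_leq_card.
apply/subsetP => u Hu; move/allP: A => /(_ u Hu) /andP[H1 H2].
by rewrite inE H1 H2.
Qed.

Lemma degR_le (T : finType) (e : rel T) (R : {set T}) (x : T) (s : seq T) :
  (forall u, u \in R -> e x u -> u \in s) -> (degR e R x <= size s)%N.
Proof.
move=> H; rewrite /degR; apply: leq_trans (card_size s).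
apply: subset_leq_card; apply/subsetP => u; rewrite inE => /andP[H1 H2].
exact: H.
Qed.

Ltac neqs := repeat match goal with
 | |- context[?x == ?x] => rewrite eqxx
 | H : is_true (?x != ?y) |- context[?x == ?y] => rewrite (negbTE H)
 | H : is_true (?y != ?x) |- context[?x == ?y] => rewrite (eq_sym x y) (negbTE H)
 end.

Ltac edges := repeat match goal with
 | H : is_true (?e ?x ?y) |- context[?e ?x ?y] => rewrite H
 end.

Ltac mem := rewrite /= ?inE; neqs; rewrite /=; done.
Ltac side := rewrite /= ?inE; neqs; edges; rewrite /=; done.

Ltac arith x := rewrite /= /gI /indic ?inE; neqs; rewrite /=;
  repeat (match goal with Hd : context[deg _ x] |- _ => move: Hd end);
  match goal with |- context[degR ?e ?R x] =>
    let d := fresh "d" in let n := fresh "n" in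
    move: (deg e x) (degR e R x) => d n; clear; lia end.

Ltac grd x s := apply: (@win_greedy _ _ _ _ x); [assumption|assumption|mem|
  match goal with |- context[degR ?e ?R x] =>
    let H := fresh in
    have H : (size s <= degR e R x)%N; [apply: degR_ge; side | move: H; arith x] end
 |].

Ltac grd0 x := apply: (@win_greedy _ _ _ _ x); [assumption|assumption|mem| arith x |].

Lemma win_emp (T : finType) (e : rel T) g (R : {set T}) : R = set0 -> Win e g R.
Proof. by move=> ->; apply: win0. Qed.

Ltac fin := apply: win_emp; let u := fresh "u" in let Hu := fresh "Hu" in
  apply/setP => u; rewrite [in RHS]inE; apply/negP => Hu; rewrite !inE in Hu;
  repeat (match goal with H : is_true (_ && _) |- _ => case/andP: H => ? ? end);
  repeat (match goal with H : is_true (_ || _) |- _ => case/orP: H => H end);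
  match goal with H : is_true (u == _) |- _ => move/eqP: H => H; subst u end;
  match goal with H : is_true (?x != ?x) |- _ => by rewrite eqxx in H end.

Ltac casev := let v := fresh "v" in let Hv := fresh "Hv" in let HF := fresh "HF" in
  move=> v Hv HF; rewrite !inE in Hv;
  repeat (match goal with H : is_true (_ || _) |- _ => case/orP: H => H end);
  match goal with H : is_true (v == _) |- _ => move/eqP: H => H; subst v end.


Ltac unpack := repeat match goal with
 | H : is_true (_ && _) |- _ => case/andP: H => ? ?
 | H : is_true (uniq _) |- _ => rewrite /= !inE in H
 | H : is_true (~~ (_ || _)) |- _ => rewrite negb_or in H
 | H : is_true (dia _ _ _ _ _) |- _ => rewrite /dia in H
 | H : is_true (tri _ _ _ _) |- _ => rewrite /tri in H
 end.

Ltac symedges e Hs := repeat match goal with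
 | H : is_true (e ?x ?y) |- _ =>
   lazymatch goal with
   | _ : is_true (e y x) |- _ => fail
   | _ => let H' := fresh "E" in have H' : e y x by rewrite Hs
   end
 end.

Ltac fixdeg x s := match goal with |- context[degR ?e ?R x] =>
  let H := fresh in
  have H : (size s <= degR e R x)%N; [apply: degR_ge; side |
  move: H; repeat (match goal with Hd : context[deg _ x] |- _ => move: Hd end);
  move: (deg e x) (degR e R x); clear; rewrite /=; lia] end.

Ltac go v0 s := apply: (@reduce _ _ _ _ v0); [assumption|assumption| mem | fixdeg v0 s | .. ].

Lemma edge_neq (T : finType) (e : rel T) (x y : T) : irreflexive e -> e x y -> x != y.
Proof. by move=> Hi Hxy; apply/eqP => E; move: Hxy; rewrite E Hi. Qed.

Ltac dle := let u := fresh "u" in let Hu := fresh "Hu" in let Hcu := fresh "Hcu" in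
  move=> u; rewrite !inE => Hu Hcu;
  repeat (match goal with H : is_true (_ || _) |- _ => case/orP: H => H end);
  match goal with H : is_true (u == _) |- _ => move/eqP: H => H; subst u end;
  rewrite ?eqxx ?orbT //;
  match goal with
  | H : is_true (?r ?x ?x), Hi : irreflexive ?r |- _ => by rewrite Hi in H
  | H : is_true (~~ ?p), H' : is_true ?p |- _ => by rewrite H' in H
  end.

Ltac k4 a b c d := match goal with HF : F_free ?e ?ell _ _, Hs : symmetric ?e |- _ =>
  exfalso; move: HF; apply: (@k4_notfree _ e ell _ _ a b c d); try exact: Hs;
  first [assumption | side] end.

Lemma D2_ok (T : finType) (e : rel T) (ell : nat) (a b c : T) :
  symmetric e -> irreflexive e -> tri e a b c ->
  deg e a = 3%N -> deg e b = 3%N -> (deg e c = 3%N \/ deg e c = 4%N) ->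
  enh_weak_reducible e ell 4 [set a; b; c] [set a; b; c].
Proof.
move=> Hs Hi Ht Da Db Dc; unpack; symedges e Hs.
have nab : a != b by apply: (edge_neq Hi); assumption.
have nbc : b != c by apply: (edge_neq Hi); assumption.
have nac : a != c by apply: (edge_neq Hi); assumption.
go a [:: b; c].
- grd c [:: b]. grd0 b. fin.
- grd c [:: a; b]. grd0 b. grd0 a. fin.
- casev.
  + grd c [:: a; b]. grd a [:: b]. grd0 b. fin.
  + grd c [:: a; b]. grd b [:: a]. grd0 a. fin.
  + grd c [:: a; b]. grd a [:: b]. grd0 b. fin.
Qed.

Lemma D3_ok (T : finType) (e : rel T) (ell : nat) (a b c d b2 c2 d2 : T) :
  symmetric e -> irreflexive e -> uniq [:: a; b; c; d; b2; c2; d2] ->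
  dia e a b c d && dia e a b2 c2 d2 ->
  [/\ deg e a = 6%N, deg e b = 3%N, deg e c = 4%N & deg e d = 3%N] ->
  [/\ deg e b2 = 3%N, deg e c2 = 4%N & deg e d2 = 4%N] ->
  enh_weak_reducible e ell 4 [set a; b; c; d; b2; c2; d2] [set a; b; c; d; b2; c2; d2].
Proof.
move=> Hs Hi U Hd [Da Db Dc Dd] [Db2 Dc2 Dd2]; unpack; symedges e Hs.
go b [:: a; c; d].
- grd c [:: a]. grd a [:: d; b2; c2; d2]. grd c2 [:: b2]. grd d2 [:: b2]. grd0 d. grd0 b2. fin.
- grd a [:: b; c; d; b2; c2; d2]. grd c [:: b]. grd c2 [:: b2]. grd d2 [:: b2]. grd0 b. grd0 d. grd0 b2. fin.
- casev.
  + grd a [:: b; c; d; b2; c2; d2]. grd c [:: b]. grd c2 [:: b2]. grd d2 [:: b2]. grd0 b. grd0 d. grd0 b2. fin.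
  + grd a [:: b; c; d; b2; c2; d2]. grd c [:: b]. grd b [:: d]. grd0 d. grd c2 [:: b2]. grd d2 [:: b2]. grd0 b2. fin.
  + grd c [:: a; b]. grd a [:: b; d; b2; c2; d2]. grd c2 [:: b2]. grd d2 [:: b2]. grd0 b. grd0 d. grd0 b2. fin.
  + grd a [:: b; c; d; b2; c2; d2]. grd c [:: b]. grd d [:: b]. grd0 b. grd c2 [:: b2]. grd d2 [:: b2]. grd0 b2. fin.
  + grd c2 [:: a; b2]. grd d2 [:: a; b2]. grd b2 [:: a]. grd a [:: b; c; d]. grd c [:: b]. grd0 b. grd0 d. fin.
  + grd c2 [:: a; b2]. grd a [:: b; c; d; b2; d2]. grd c [:: b]. grd d2 [:: b2]. grd0 b. grd0 d. grd0 b2. fin.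
  + grd d2 [:: a; b2]. grd a [:: b; c; d; b2; c2]. grd c [:: b]. grd c2 [:: b2]. grd0 b. grd0 d. grd0 b2. fin.
Qed.

Lemma D5_ok (T : finType) (e : rel T) (ell : nat) (a b c d : T) :
  symmetric e -> irreflexive e -> dia e a b c d ->
  [/\ deg e a = 4%N, deg e b = 5%N, deg e c = 3%N & deg e d = 3%N] ->
  enh_weak_reducible e ell 4 [set a; b; c; d] [set a; b; c; d].
Proof.
move=> Hs Hi Hd [Da Db Dc Dd]; unpack; symedges e Hs.
go c [:: a; b].
- grd b [:: a; d]. grd a [:: d]. grd0 d. fin.
- grd b [:: a; c; d]. grd a [:: c; d]. grd0 c. grd0 d. fin.
- casev.
  + grd b [:: a; c; d]. grd a [:: c; d]. grd0 c. grd0 d. fin.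
  + grd b [:: a; c; d]. grd a [:: c; d]. grd0 c. grd0 d. fin.
  + grd b [:: a; c; d]. grd c [:: a]. grd a [:: d]. grd0 d. fin.
  + grd b [:: a; c; d]. grd d [:: a]. grd a [:: c]. grd0 c. fin.
Qed.

Lemma D8_ok (T : finType) (e : rel T) (ell : nat) (a b c d x : T) :
  symmetric e -> irreflexive e -> dia e a b c d ->
  [/\ deg e a = 5%N, deg e b = 5%N, deg e c = 3%N & deg e d = 3%N] ->
  uniq [:: a; b; c; d; x] && e a x -> deg e x = 3%N ->
  enh_weak_reducible e ell 4 [set a; b; c; d; x] [set a; b; c; d; x].
Proof.
move=> Hs Hi Hd [Da Db Dc Dd] Hu Dx; unpack; symedges e Hs.
go c [:: a; b].
- grd b [:: a; d]. grd a [:: d; x]. grd0 d. grd0 x. fin.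
- grd a [:: b; c; d; x]. grd b [:: c; d]. grd0 c. grd0 d. grd0 x. fin.
- casev.
  + grd a [:: b; c; d; x]. grd b [:: c; d]. grd0 c. grd0 d. grd0 x. fin.
  + grd b [:: a; c; d]. grd a [:: c; d; x]. grd0 c. grd0 d. grd0 x. fin.
  + grd b [:: a; c; d]. grd c [:: a]. grd a [:: d; x]. grd0 d. grd0 x. fin.
  + grd b [:: a; c; d]. grd d [:: a]. grd a [:: c; x]. grd0 c. grd0 x. fin.
  + grd x [:: a]. grd a [:: b; c; d]. grd b [:: c; d]. grd0 c. grd0 d. fin.
Qed.

Lemma D9_ok (T : finType) (e : rel T) (ell : nat) (u v w : T) :
  symmetric e -> irreflexive e -> uniq [:: u; v; w] ->
  [/\ deg e u = 3%N, deg e v = 3%N & deg e w = 3%N] ->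
  e u v -> e v w ->
  enh_weak_reducible e ell 4 [set u; v; w] [set u; v; w].
Proof.
move=> Hs Hi Hu [Du Dv Dw] Euv Evw; unpack; symedges e Hs.
go v [:: u; w].
- grd0 u. grd0 w. fin.
- grd0 u. grd0 v. grd0 w. fin.
- casev.
  + grd u [:: v]. grd0 v. grd0 w. fin.
  + grd v [:: u]. grd0 u. grd0 w. fin.
  + grd w [:: v]. grd0 u. grd0 v. fin.
Qed.

Lemma D10_ok (T : finType) (e : rel T) (ell : nat) (a b c d : T) :
  symmetric e -> irreflexive e -> dia e a b c d ->
  [/\ deg e a = 5%N, deg e b = 3%N, deg e c = 4%N & deg e d = 3%N] ->
  enh_weak_reducible e ell 4 [set a; b; c; d] [set a; b; c; d].
Proof.
move=> Hs Hi Hd [Da Db Dc Dd]; unpack; symedges e Hs.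
go d [:: a; b].
- grd a [:: b; c]. grd c [:: b]. grd0 b. fin.
- grd a [:: b; c; d]. grd c [:: b]. grd0 b. grd0 d. fin.
- casev.
  + grd a [:: b; c; d]. grd c [:: b]. grd0 b. grd0 d. fin.
  + grd a [:: b; c; d]. grd c [:: b]. grd b [:: d]. grd0 d. fin.
  + grd c [:: a; b]. grd a [:: b; d]. grd0 b. grd0 d. fin.
  + grd a [:: b; c; d]. grd c [:: b]. grd d [:: b]. grd0 b. fin.
Qed.

Lemma D11_ok (T : finType) (e : rel T) (ell : nat) (a b c x : T) :
  symmetric e -> irreflexive e -> tri e a b c ->
  [/\ deg e a = 5%N, deg e b = 3%N & deg e c = 3%N] ->
  uniq [:: a; b; c; x] && e a x -> deg e x = 3%N ->
  enh_weak_reducible e ell 4 [set a; b; c; x] [set a; b; c; x].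
Proof.
move=> Hs Hi Ht [Da Db Dc] Hu Dx; unpack; symedges e Hs.
go b [:: a; c].
- grd a [:: c; x]. grd0 c. grd0 x. fin.
- grd a [:: b; c; x]. grd0 b. grd0 c. grd0 x. fin.
- casev.
  + grd a [:: b; c; x]. grd0 b. grd0 c. grd0 x. fin.
  + grd a [:: b; c; x]. grd b [:: c]. grd0 c. grd0 x. fin.
  + grd a [:: b; c; x]. grd c [:: b]. grd0 b. grd0 x. fin.
  + grd x [:: a]. grd a [:: b; c]. grd0 b. grd0 c. fin.
Qed.

Lemma D12_ok (T : finType) (e : rel T) (ell : nat) (a b c b2 c2 : T) :
  symmetric e -> irreflexive e -> uniq [:: a; b; c; b2; c2] ->
  tri e a b c -> tri e a b2 c2 ->
  [/\ deg e a = 6%N, deg e b = 3%N, deg e c = 3%N, deg e b2 = 3%N & deg e c2 = 3%N] ->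
  enh_weak_reducible e ell 4 [set a; b; c; b2; c2] [set a; b; c; b2; c2].
Proof.
move=> Hs Hi Hu Ht Ht2 [Da Db Dc Db2 Dc2]; unpack; symedges e Hs.
go b [:: a; c].
- grd a [:: c; b2; c2]. grd0 c. grd0 b2. grd0 c2. fin.
- grd a [:: b; c; b2; c2]. grd0 b. grd0 c. grd0 b2. grd0 c2. fin.
- casev.
  + grd a [:: b; c; b2; c2]. grd0 b. grd0 c. grd0 b2. grd0 c2. fin.
  + grd a [:: b; c; b2; c2]. grd b [:: c]. grd0 c. grd0 b2. grd0 c2. fin.
  + grd a [:: b; c; b2; c2]. grd c [:: b]. grd0 b. grd0 b2. grd0 c2. fin.
  + grd a [:: b; c; b2; c2]. grd b2 [:: c2]. grd0 c2. grd0 b. grd0 c. fin.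
  + grd a [:: b; c; b2; c2]. grd c2 [:: b2]. grd0 b2. grd0 b. grd0 c. fin.
Qed.

Lemma D6_ok (T : finType) (e : rel T) (ell : nat) (a b c d : T) :
  symmetric e -> irreflexive e -> dia e a b c d ->
  [/\ deg e a = 4%N, deg e b = 3%N, deg e c = 4%N & deg e d = 4%N] ->
  enh_weak_reducible e ell 4 [set a; b; c; d] [set a; b; c; d].
Proof.
move=> Hs Hi Hd [Da Db Dc Dd]; unpack; symedges e Hs.
go a [:: b; c; d].
- grd c [:: b]. grd d [:: b]. grd0 b. fin.
- grd c [:: a]. grd d [:: a]. grd a [:: b]. grd0 b. fin.
- casev.
  + grd a [:: b; c; d]. grd c [:: b]. grd d [:: b]. grd0 b. fin.
  + case: (boolP (e c d)) => Hcd; first by k4 a b c d.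
    have H1 : (size [:: b; c; d] <= degR e [set a; b; c; d] a)%N by apply: degR_ge; side.
    have H2 : (degR e [set a; b; c; d] c <= size [:: a; b])%N by apply: degR_le; dle.
    apply: (@win_trick _ _ _ _ a c Hs Hi); [mem|mem|assumption| | |].
    * move: H1; arith a.
    * move: H1 H2 Da Dc; rewrite /gI /indic !inE; neqs; rewrite /=.
      move: (deg e a) (deg e c) (degR e [set a; b; c; d] a) (degR e [set a; b; c; d] c).
      clear; lia.
    * grd d [:: b]. grd b [:: c]. grd0 c. fin.
  + grd c [:: a; b]. grd d [:: a]. grd a [:: b]. grd0 b. fin.
  + grd d [:: a; b]. grd c [:: a]. grd a [:: b]. grd0 b. fin.
Qed.

Lemma D7_ok (T : finType) (e : rel T) (ell : nat) (a b c d x : T) :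
  symmetric e -> irreflexive e -> dia e a b c d ->
  [/\ deg e a = 5%N, deg e b = 3%N, deg e c = 4%N & deg e d = 4%N] ->
  uniq [:: a; b; c; d; x] && e a x -> deg e x = 3%N ->
  enh_weak_reducible e ell 4 [set a; b; c; d; x] [set a; b; c; d; x].
Proof.
move=> Hs Hi Hd [Da Db Dc Dd] Hu Dx; unpack; symedges e Hs.
go a [:: b; c; d; x].
- grd c [:: b]. grd d [:: b]. grd0 b. grd0 x. fin.
- grd a [:: b; c; d; x]. grd c [:: b]. grd d [:: b]. grd0 b. grd0 x. fin.
- casev.
  + grd a [:: b; c; d; x]. grd c [:: b]. grd d [:: b]. grd0 b. grd0 x. fin.
  + case: (boolP (e c d)) => Hcd; first by k4 a b c d.
    case: (boolP (e c x)) => Hcx.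
      have Exc : e x c by rewrite Hs.
      grd a [:: b; c; d; x]. grd d [:: b]. grd b [:: c]. grd c [:: x]. grd0 x. fin.
    have H1 : (size [:: b; c; d; x] <= degR e [set a; b; c; d; x] a)%N by apply: degR_ge; side.
    have H2 : (degR e [set a; b; c; d; x] c <= size [:: a; b])%N by apply: degR_le; dle.
    apply: (@win_trick _ _ _ _ a c Hs Hi); [mem|mem|assumption| | |].
    * move: H1; arith a.
    * move: H1 H2 Da Dc; rewrite /gI /indic !inE; neqs; rewrite /=.
      move: (deg e a) (deg e c) (degR e [set a; b; c; d; x] a) (degR e [set a; b; c; d; x] c).
      clear; lia.
    * grd d [:: b]. grd b [:: c]. grd0 c. grd0 x. fin.
  + grd c [:: a; b]. grd d [:: a]. grd a [:: b; x]. grd0 b. grd0 x. fin.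
  + grd d [:: a; b]. grd c [:: a]. grd a [:: b; x]. grd0 b. grd0 x. fin.
  + grd x [:: a]. grd a [:: b; c; d]. grd c [:: b]. grd d [:: b]. grd0 b. fin.
Qed.

Theorem mainTheorem9 (T : finType) (e : rel T) (ell : nat) (S : {set T}) :
  symmetric e -> irreflexive e -> (3 <= ell)%N ->
  config e S ->
  enh_weak_reducible e ell 4 S S.
Proof.
move=> Hs Hi _ Hc.
case: Hc => [H|Hc].
  by case: H => a [b [c [Ht Da Db Dc ->]]]; apply: D2_ok.
case: Hc => [H|Hc].
  by case: H => a [b [c [d [b2 [c2 [d2 [U Hd D1 D2 ->]]]]]]]; apply: D3_ok.
case: Hc => [H|Hc].
  by case: H => a [b [c [d [Hd D1 ->]]]]; apply: D5_ok.
case: Hc => [H|Hc].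
  by case: H => a [b [c [d [Hd D1 ->]]]]; apply: D6_ok.
case: Hc => [H|Hc].
  by case: H => a [b [c [d [x [Hd D1 Hu Dx ->]]]]]; apply: D7_ok.
case: Hc => [H|Hc].
  by case: H => a [b [c [d [x [Hd D1 Hu Dx ->]]]]]; apply: D8_ok.
case: Hc => [H|Hc].
  by case: H => u [v [w [[U D1 Euv Evw _] ->]]]; apply: D9_ok.
case: Hc => [H|Hc].
  by case: H => a [b [c [d [Hd D1 ->]]]]; apply: D10_ok.
case: Hc => [H|H].
  by case: H => a [b [c [x [Ht D1 Hu Dx ->]]]]; apply: D11_ok.
by case: H => a [b [c [b2 [c2 [U Ht1 Ht2 D1 ->]]]]]; apply: D12_ok.
Qed.
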